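(* Let $B=(\vec{e}_{\vec{k}(1)},\dots,\vec{e}_{\vec{k}(d)})$ be basis blades of $\mathcal{G}^{p,q}$, let $\vec{A}=\sum_{\vec{j}}a_{\vec{j}}\vec{e}_{\vec{j}}\in\mathcal{G}^{p,q}$, and for $\vec{l}\in\{0,1\}^d$ define $\vec c^{\vec{l}}(B)=\bigcap_{\nu=1}^d\vec c^{l_\nu}(\vec{e}_{\vec{k}(\nu)})$. Then the sets $\vec c^{\vec l}(B)$, $\vec l\in\{0,1\}^d$, are pairwise disjoint with union the set of all multi-indices $\vec j\subseteq\{1,\dots,n\}$, and for every $\vec l\in\{0,1\}^d$, $$\vec{A}_{\vec c^{\vec{l}}(B)}=\sum_{\vec{j}\in\vec c^{\vec{l}}(B)}a_{\vec{j}}\vec{e}_{\vec{j}}.$$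
   Context: $\mathcal{G}^{p,q}$ ($n=p+q$) is the real geometric algebra generated by orthonormal $\vec e_1,\dots,\vec e_n$ with $\vec e_j^2=1$ ($j\le p$), $\vec e_j^2=-1$ ($j>p$), $\vec e_j\vec e_k=-\vec e_k\vec e_j$ ($j\neq k$); $\vec e_{\vec j}=\vec e_{j_1}\cdots\vec e_{j_\iota}$ for $\vec j=\{j_1<\dots<j_\iota\}$, $\vec e_\emptyset=1$. For a basis blade $\vec e_{\vec k}$: $\vec c^0(\vec{e}_{\vec{k}})=\{\vec{j}:|\vec j||\vec k|-|\vec j\cap\vec k|\text{ even}\}$, $\vec c^1(\vec{e}_{\vec{k}})=\{\vec{j}:|\vec j||\vec k|-|\vec j\cap\vec k|\text{ odd}\}$. For invertible $\vec B$: $\vec{A}_{\vec c^0(\vec{B})}=\frac12(\vec{A}+\vec{B}^{-1}\vec{A}\vec{B})$, $\vec{A}_{\vec c^1(\vec{B})}=\frac12(\vec{A}-\vec{B}^{-1}\vec{A}\vec{B})$, and for a tuple $(\vec B_1,\dots,\vec B_d)$ and $\vec l\in\{0,1\}^d$: $\vec{A}_{\vec c^{\vec{l}}(\vec B_1,\dots,\vec B_d)}=((\vec{A}_{\vec c^{l_1}(\vec{B}_1)})_{\vec c^{l_2}(\vec{B}_2)}\cdots)_{\vec c^{l_d}(\vec{B}_d)}$. *)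

(* Defs.v *)
From HB Require Import structures.
From mathcomp Require Import all_boot all_order all_algebra.
From mathcomp Require Import reals.
Set Implicit Arguments. Unset Strict Implicit. Unset Printing Implicit Defensive.
Import Order.TTheory GRing.Theory Num.Theory.
Local Open Scope ring_scope.

(* Generators e_1..e_n are indexed by 'I_n (0-based: generator i : 'I_n is
   e_{i+1}); a multi-index j = {j1 < ... < j_iota} is a {set 'I_n}.
   An element of G^{p,q} is its coefficient family (a_j)_j. *)
Notation GA R n := {ffun {set 'I_n} -> R^o}.

Definition blade (R : realType) (n : nat) (J : {set 'I_n}) : GA R n :=
  [ffun J' => (J' == J)%:R].

(* e_J e_K = bsign J K * e_{J symmetric-difference K}:
   one sign (-1) for each pair j in J, k in K with k < j (anticommutation),
   and one sign (-1) for each common generator with square -1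
   (i.e. 0-based index >= p, that is e_j with j > p). *)
Definition bsign (R : realType) (p q : nat) (J K : {set 'I_(p + q)}) : R :=
  (-1) ^+ (#|[set jk in setX J K | jk.2 < jk.1]|
           + #|[set j in J :&: K | p <= j]|)%N.

Definition symdiff (n : nat) (J K : {set 'I_n}) : {set 'I_n} :=
  (J :\: K) :|: (K :\: J).

Definition gmul (R : realType) (p q : nat) (A B : GA R (p + q)) : GA R (p + q) :=
  \sum_(J : {set 'I_(p + q)}) \sum_(K : {set 'I_(p + q)})
     (A J * B K * bsign R J K) *: blade R (symdiff J K).

Definition gone (R : realType) (n : nat) : GA R n := blade R set0.

Definition cset (n : nat) (l : bool) (K : {set 'I_n}) : {set {set 'I_n}} :=
  [set J : {set 'I_n} | odd (#|J| * #|K| - #|J :&: K|)%N == l].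

Definition csetB (n d : nat) (k : 'I_d -> {set 'I_n}) (l : {ffun 'I_d -> bool})
  : {set {set 'I_n}} :=
  \bigcap_(nu : 'I_d) cset (l nu) (k nu).

(* A_{c^0(B)} = (A + B^-1 A B)/2,  A_{c^1(B)} = (A - B^-1 A B)/2,
   where Binv is the inverse of B *)
Definition gproj (R : realType) (p q : nat) (Binv B : GA R (p + q)) (l : bool)
  (A : GA R (p + q)) : GA R (p + q) :=
  (1 / 2 : R) *: (A + (if l then -1 else 1) *: gmul (gmul Binv A) B).

Definition gprojB (R : realType) (p q d : nat) (Binv B : 'I_d -> GA R (p + q))
  (l : {ffun 'I_d -> bool}) (A : GA R (p + q)) : GA R (p + q) :=
  foldl (fun X nu => gproj (Binv nu) (B nu) (l nu) X) A (enum 'I_d).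

(* Main.v *)
Require Import Defs.
From HB Require Import structures.
From mathcomp Require Import all_boot all_order all_algebra.
From mathcomp Require Import reals.
From mathcomp Require Import ring lra.
Import Order.TTheory GRing.Theory Num.Theory.
Local Open Scope ring_scope.
Set Implicit Arguments. Unset Strict Implicit.

Section S.
Variables (R : realType) (p q : nat).
Local Notation n := (p + q)%N.
Local Notation GAt := (GA R n).

Lemma in_symdiff (J K : {set 'I_n}) x : (x \in symdiff J K) = ((x \in J) != (x \in K)).
Proof. by rewrite /symdiff !inE; case: (x \in J); case: (x \in K). Qed.

Lemma symdiffK (J K : {set 'I_n}) : symdiff J (symdiff J K) = K.
Proof. by apply/setP=> x; rewrite !in_symdiff; case: (x \in J); case: (x \in K). Qed.

Lemma symdiffC (J K : {set 'I_n}) : symdiff J K = symdiff K J.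
Proof. by apply/setP=> x; rewrite !in_symdiff; case: (x \in J); case: (x \in K). Qed.

Lemma symdiff_eq0 (J K : {set 'I_n}) : (symdiff J K == set0) = (J == K).
Proof.
apply/eqP/eqP => [h|->].
  apply/setP=> x; move/setP: h => /(_ x); rewrite in_symdiff inE.
  by case: (x \in J); case: (x \in K).
by apply/setP=> x; rewrite in_symdiff inE; case: (x \in K).
Qed.

Lemma bladeE (J J0 : {set 'I_n}) : (blade R J J0 : R) = (J0 == J)%:R.
Proof. by rewrite /blade ffunE. Qed.

Lemma scaleE (a : R) (X : GAt) J : (a *: X) J = a * X J.
Proof. by rewrite ffunE. Qed.

Lemma gmulE (X Y : GAt) J0 :
  (gmul X Y J0 : R) = \sum_J (X J : R) * (Y (symdiff J J0) : R) * bsign R J (symdiff J J0).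
Proof.
rewrite /gmul sum_ffunE; apply: eq_bigr => J _.
rewrite sum_ffunE (bigD1 (symdiff J J0)) //= big1 ?addr0.
  by rewrite scaleE bladeE symdiffK eqxx mulr1.
move=> K hK; rewrite scaleE bladeE.
case: eqP => [e|]; last by rewrite mulr0.
by move: hK; rewrite e symdiffK eqxx.
Qed.

Lemma card_sign (T : finType) (P : pred T) :
  (-1) ^+ #|[set x | P x]| = \prod_x ((-1) ^+ P x : R).
Proof.
rewrite -prodr_const big_mkcond /=; apply: eq_bigr => x _.
by rewrite inE; case: (P x).
Qed.

Lemma bsignE (J K : {set 'I_n}) : bsign R J K =
  (\prod_x \prod_y ((-1) ^+ [&& x \in J, y \in K & (y < x)%N] : R)) *
  \prod_x ((-1) ^+ [&& x \in J, x \in K & (p <= x)%N] : R).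
Proof.
rewrite /bsign exprD; congr (_ * _).
  have -> : [set jk in setX J K | (jk.2 < jk.1)%N] =
     [set jk | [&& jk.1 \in J, jk.2 \in K & (jk.2 < jk.1)%N]].
    by apply/setP => -[x y]; rewrite !inE /= andbA.
  by rewrite card_sign pair_big /=.
have -> : [set j in J :&: K | (p <= j)%N] = [set j | [&& j \in J, j \in K & (p <= j)%N]].
  by apply/setP => x; rewrite !inE andbA.
by rewrite card_sign.
Qed.

Lemma sumb_card (T : finType) (A : {set T}) :
  (\sum_(x : T) (x \in A : nat) = #|A|)%N.
Proof.
rewrite -sum1_card [RHS]big_mkcond /=; apply: eq_bigr => x _.
by case: (x \in A).
Qed.

Lemma count_neq (J K : {set 'I_n}) :
  (\sum_(x : 'I_n) \sum_(y : 'I_n) [&& x \in J, y \in K & x != y] =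
   #|J| * #|K| - #|J :&: K|)%N.
Proof.
have h1 : (\sum_(x : 'I_n) \sum_(y : 'I_n) ((x \in J) && (y \in K)) = #|J| * #|K|)%N.
  rewrite -sumb_card big_distrl /=; apply: eq_bigr => x _.
  case: (x \in J) => /=; first by rewrite mul1n sumb_card.
  by rewrite mul0n big1.
have h2 : (\sum_(x : 'I_n) \sum_(y : 'I_n) [&& x \in J, y \in K & x == y] = #|J :&: K|)%N.
  rewrite -sumb_card; apply: eq_bigr => x _.
  rewrite (bigD1 x) //= eqxx andbT big1 ?addn0 ?inE //.
  by move=> y /negbTE; rewrite eq_sym => ->; rewrite !andbF.
rewrite -h1 -h2.
suff -> : (\sum_(x : 'I_n) \sum_(y : 'I_n) ((x \in J) && (y \in K)) =
  \sum_(x : 'I_n) \sum_(y : 'I_n) [&& x \in J, y \in K & x != y] +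
  \sum_(x : 'I_n) \sum_(y : 'I_n) [&& x \in J, y \in K & x == y])%N by rewrite addnK.
rewrite -big_split /=; apply: eq_bigr => x _; rewrite -big_split /=; apply: eq_bigr => y _.
by case: (x \in J); case: (y \in K); case: (x == y).
Qed.

Lemma sign_target (J K : {set 'I_n}) :
  (-1) ^+ (#|J| * #|K| - #|J :&: K|)%N =
  \prod_(x : 'I_n) \prod_(y : 'I_n) ((-1) ^+ [&& x \in J, y \in K & x != y] : R).
Proof.
rewrite -count_neq expr_sum; apply: eq_bigr => x _; by rewrite expr_sum.
Qed.

Lemma bsignE2 (J K : {set 'I_n}) : bsign R J K =
  \prod_x ((\prod_y ((-1) ^+ [&& x \in J, y \in K & (y < x)%N] : R)) *
           (-1) ^+ [&& x \in J, x \in K & (p <= x)%N]).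
Proof. by rewrite bsignE -big_split. Qed.

Lemma ring6 (a1 a2 a3 n1 n2 n3 b1 b2 : R) :
  n1 * n2 * n3 = 1 -> a1 * a2 * a3 = b1 * b2 ->
  (a1 * n1) * (a2 * n2) * (a3 * n3) = b1 * b2.
Proof. by move=> h1 h2; rewrite -h2 -[RHS]mulr1 -h1; ring. Qed.

Lemma sign_id (J K : {set 'I_n}) :
  bsign R K K * bsign R K J * bsign R (symdiff K J) K =
  (-1) ^+ (#|J| * #|K| - #|J :&: K|)%N.
Proof.
rewrite sign_target !bsignE2 -!big_split /=.
rewrite [RHS](_ : _ = \prod_(x : 'I_n) \prod_(y : 'I_n)
   (((-1) ^+ [&& x \in J, y \in K & (y < x)%N]) * ((-1) ^+ [&& x \in J, y \in K & (x < y)%N]) : R)); last first.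
  apply: eq_bigr => x _; apply: eq_bigr => y _.
  rewrite -val_eqE neq_ltn /=.
  by case: (x \in J); case: (y \in K); case: (ltngtP x y); rewrite /= ?expr0 ?expr1 ?mulr1 ?mul1r.
under [RHS]eq_bigr => x _ do rewrite big_split.
rewrite [RHS]big_split /= [X in _ = _ * X]exchange_big /= -big_split /=.
apply: eq_bigr => x _; apply: ring6.
  rewrite in_symdiff.
  by case: (x \in K); case: (x \in J); case: (p <= x)%N; rewrite /= ?expr0 ?expr1; ring.
rewrite -[X in X * _ = _]big_split -[LHS]big_split -[RHS]big_split /=.
apply: eq_bigr => y _; rewrite in_symdiff.
by case: (x \in K); case: (x \in J); case: (y \in K); case: (y \in J); case: (y < x)%N;
  rewrite /= ?expr0 ?expr1; ring.
Qed.

Lemma bsign_sq (J K : {set 'I_n}) : bsign R J K * bsign R J K = 1.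
Proof. by rewrite /bsign -exprD -signr_odd oddD addbb expr0. Qed.

Lemma symdiffKr (J K : {set 'I_n}) : symdiff (symdiff J K) K = J.
Proof. by apply/setP=> x; rewrite !in_symdiff; case: (x \in J); case: (x \in K). Qed.

Lemma binvE (K : {set 'I_n}) (Bi : GAt) : gmul (blade R K) Bi = gone R n ->
  forall L, Bi L = (L == K)%:R * bsign R K K.
Proof.
move=> h L; have := congr1 (fun f : GAt => f (symdiff K L)) h => /=.
rewrite gmulE (bigD1 K) //= big1 ?addr0; last first.
  by move=> J /negbTE hJ; rewrite bladeE hJ !mul0r.
rewrite bladeE eqxx mul1r symdiffK /gone bladeE symdiff_eq0 => e.
rewrite eq_sym in e; move: e.
have [->|ne] := eqVneq L K => /= e.
  by rewrite mul1r -[Bi K]mulr1 -(bsign_sq K K) mulrA e mul1r.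
by rewrite mul0r -[Bi L]mulr1 -(bsign_sq K L) mulrA e !mul0r.
Qed.

Lemma conjE (K : {set 'I_n}) (Bi A : GAt) J0 :
  (forall L, Bi L = (L == K)%:R * bsign R K K) ->
  gmul (gmul Bi A) (blade R K) J0 = A J0 * (-1) ^+ (#|J0| * #|K| - #|J0 :&: K|)%N.
Proof.
move=> hB; rewrite gmulE (bigD1 (symdiff K J0)) //= big1 ?addr0; last first.
  move=> M hM; rewrite bladeE; case: eqP => [e|]; last by move=> _; rewrite mulr0n mulr0 mul0r.
  by move: hM; rewrite -e symdiffKr eqxx.
rewrite symdiffKr bladeE eqxx mulr1 gmulE (bigD1 K) //= big1 ?addr0; last first.
  by move=> J /negbTE hJ; rewrite hB hJ !mul0r.
rewrite hB eqxx mul1r symdiffK -sign_id; ring.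
Qed.

Lemma scaleRo (a x : R) : a *: (x : R^o) = a * x.
Proof. by []. Qed.

Definition res (S : {set {set 'I_n}}) (A : GAt) : GAt :=
  [ffun J => if J \in S then A J else 0].

Lemma proj_res (K : {set 'I_n}) (Bi : GAt) l S A :
  (forall L, Bi L = (L == K)%:R * bsign R K K) ->
  gproj Bi (blade R K) l (res S A) = res (S :&: cset l K) A.
Proof.
move=> hB; apply/ffunP => J0.
rewrite /gproj !ffunE conjE // !ffunE !inE -signr_odd.
rewrite !scaleRo.
case: (J0 \in S) => /=; last by rewrite !mul0r mulr0 addr0 mulr0.
by case: l; case: odd => /=; rewrite ?expr0 ?expr1; field.
Qed.

Lemma sum_blade (S : {set {set 'I_n}}) (A : GAt) :
  \sum_(J in S) A J *: blade R J = res S A.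
Proof.
apply/ffunP => J0; rewrite sum_ffunE ffunE.
under eq_bigr => J _ do rewrite scaleE bladeE.
case: (boolP (J0 \in S)) => h.
  rewrite (bigD1 J0) //= eqxx mulr1 big1 ?addr0 // => J /andP[_ hJ].
  by rewrite eq_sym (negbTE hJ) mulr0n mulr0.
apply: big1 => J hJ; have /negbTE -> : J0 != J by apply: contraNneq h => ->.
by rewrite mulr0n mulr0.
Qed.

Lemma fold_res d (k : 'I_d -> {set 'I_n}) (Bi : 'I_d -> GAt)
  (l : {ffun 'I_d -> bool})
  (hB : forall nu L, Bi nu L = (L == k nu)%:R * bsign R (k nu) (k nu)) s S A :
  foldl (fun X nu => gproj (Bi nu) (blade R (k nu)) (l nu) X) (res S A) s =
  res (S :&: \bigcap_(nu <- s) cset (l nu) (k nu)) A.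
Proof.
elim: s S => [|nu s IH] S /=; first by rewrite big_nil setIT.
by rewrite proj_res // IH big_cons setIA.
Qed.
End S.

Unset Implicit Arguments. Set Strict Implicit.

Theorem lemma3p11 (R : realType) (p q d : nat) (k : 'I_d -> {set 'I_(p + q)})
  (Binv : 'I_d -> GA R (p + q))
  (hinv : forall nu : 'I_d,
      gmul (Binv nu) (blade R (k nu)) = gone R (p + q) /\
      gmul (blade R (k nu)) (Binv nu) = gone R (p + q))
  (A : GA R (p + q)) :
  (forall l l' : {ffun 'I_d -> bool}, l != l' -> [disjoint csetB k l & csetB k l'])
  /\ \bigcup_(l : {ffun 'I_d -> bool}) csetB k l = [set: {set 'I_(p + q)}]
  /\ (forall l : {ffun 'I_d -> bool},
        gprojB Binv (fun nu => blade R (k nu)) l A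
        = \sum_(J in csetB k l) A J *: blade R J).
Proof.
split.
  move=> l l' ne; rewrite -setI_eq0; apply/eqP/setP => J; rewrite !inE.
  apply/negP => /andP[h1 h2]; move/negP: ne; apply.
  apply/eqP/ffunP => nu.
  move/bigcapP: h1 => /(_ nu isT); move/bigcapP: h2 => /(_ nu isT).
  by rewrite !inE => /eqP <- /eqP <-.
split.
  apply/setP => J; rewrite inE; apply/bigcupP.
  exists [ffun nu => odd (#|J| * #|k nu| - #|J :&: k nu|)] => //.
  by apply/bigcapP => nu _; rewrite inE ffunE.
move=> l; rewrite sum_blade /gprojB.
have hB : forall nu L, Binv nu L = (L == k nu)%:R * bsign R (k nu) (k nu).
  by move=> nu; apply: binvE; case: (hinv nu).
rewrite {1}(_ : A = res setT A); last by apply/ffunP => J; rewrite ffunE inE.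
rewrite fold_res // setTI /csetB; congr res.
by rewrite enumT; unlock index_enum.
Qed.
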